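(* Consider Primal Online Balanced Descent with parameter $\beta>0$, $\ell_2$ norm $\|\cdot\|=\|\cdot\|_2$ and Euclidean projection, at round $t$, producing $x_t$ from $x_{t-1}$ and cost function $f_t$ with minimizer $v_t$. Let $x_t^*\in\mathcal{X}$ be a point with $H_t^*=f_t(x_t^* )<H_t=f_t(x_t)$, and suppose $f_t(x)\ge\alpha\|x-v_t\|$ for all $x$, where $\alpha>0$. Then $$\|x_t-x_t^*\|-\|x_t^*-x_{t-1}\|\le-\gamma\|x_t-x_{t-1}\|,\qquad\text{where }\gamma=\sqrt{1+\left(\tfrac{2}{\alpha\beta}\right)^2}-\tfrac{2}{\alpha\beta}.$$
   Context: Primal Online Balanced Descent with parameter $\beta>0$ (norm $\|\cdot\|$, mirror map $\Phi$; here $\Phi(x)=\frac12\|x\|_2^2$): given $x_{t-1}$ and convex $f_t$, let $v_t=\arg\min_x f_t(x)$; if $\|x_{t-1}-v_t\|<\beta f_t(v_t)$ set $x_t=v_t$; otherwise, with $K^l_t=\{x:f_t(x)\le l\}$ and $x(l)=\Pi^\Phi_{K^l_t}(x_{t-1})$, where $\Pi^\Phi_K(x)=\arg\min_{y\in K}D_\Phi(y,x)$ and $D_\Phi(x,y)=\Phi(x)-\Phi(y)-\nabla\Phi(y)^T(x-y)$, increase $l$ until $\|x(l)-x_{t-1}\|=\beta l$ and set $x_t=x(l)$. *)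

(* Defs.v *)
From HB Require Import structures.
From mathcomp Require Import all_boot all_order all_algebra.
From mathcomp Require Import reals.
Set Implicit Arguments. Unset Strict Implicit. Unset Printing Implicit Defensive.
Import Order.TTheory GRing.Theory Num.Theory.
Local Open Scope ring_scope.

Section POBD.
Variables (R : realType) (n : nat).
Notation vec := 'rV[R]_n.

Definition dotp (x y : vec) : R := \sum_(i < n) x 0 i * y 0 i.
Definition l2norm (x : vec) : R := Num.sqrt (dotp x x).

Definition convex_fun (f : vec -> R) : Prop :=
  forall (x y : vec) (s : R), 0 <= s -> s <= 1 ->
    f (s *: x + (1 - s) *: y) <= s * f x + (1 - s) * f y.

Definition Phi (x : vec) : R := 2^-1 * dotp x x.
Definition gradPhi (x : vec) : vec := x.
Definition bregman (x y : vec) : R := Phi x - Phi y - dotp (gradPhi y) (x - y).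

Definition sublevel (f : vec -> R) (l : R) (x : vec) : Prop := f x <= l.

Definition is_bregman_proj (K : vec -> Prop) (x p : vec) : Prop :=
  K p /\ forall y, K y -> bregman p x <= bregman y x.

Definition is_minimizer (f : vec -> R) (v : vec) : Prop :=
  forall x, f v <= f x.

Definition pobd_step (beta : R) (f : vec -> R) (v x_prev x_next : vec) : Prop :=
  (l2norm (x_prev - v) < beta * f v /\ x_next = v) \/
  (beta * f v <= l2norm (x_prev - v) /\
   exists l : R, f v <= l /\
     is_bregman_proj (sublevel f l) x_prev x_next /\
     l2norm (x_next - x_prev) = beta * l).

End POBD.

(* Main.v *)
Require Import Defs.
From HB Require Import structures.
From mathcomp Require Import all_boot all_order all_algebra.
From mathcomp Require Import reals.
From mathcomp Require Import ring lra.
Import Order.TTheory GRing.Theory Num.Theory.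
Local Open Scope ring_scope.

Set Implicit Arguments.
Section Aux.
Variables (R : realType) (n : nat).
Implicit Types (x y z p q : 'rV[R]_n).

Lemma dotpC x y : dotp x y = dotp y x.
Proof. by apply: eq_bigr => i _; rewrite mulrC. Qed.

Lemma dotpDl x y z : dotp (x + y) z = dotp x z + dotp y z.
Proof. rewrite /dotp -big_split; apply: eq_bigr => i _; rewrite !mxE mulrDl //. Qed.

Lemma dotpNl x z : dotp (- x) z = - dotp x z.
Proof. rewrite /dotp -sumrN; apply: eq_bigr => i _; rewrite !mxE mulNr //. Qed.

Lemma dotpZl a x z : dotp (a *: x) z = a * dotp x z.
Proof. rewrite /dotp mulr_sumr; apply: eq_bigr => i _; rewrite !mxE mulrA //. Qed.

Lemma dotpBl x y z : dotp (x - y) z = dotp x z - dotp y z.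
Proof. by rewrite dotpDl dotpNl. Qed.

Lemma dotpDr x y z : dotp z (x + y) = dotp z x + dotp z y.
Proof. by rewrite dotpC dotpDl !(dotpC z). Qed.

Lemma dotpBr x y z : dotp z (x - y) = dotp z x - dotp z y.
Proof. by rewrite dotpC dotpBl !(dotpC z). Qed.

Lemma dotpZr a x z : dotp z (a *: x) = a * dotp z x.
Proof. by rewrite dotpC dotpZl dotpC. Qed.

Lemma dotp_ge0 x : 0 <= dotp x x.
Proof. by apply: sumr_ge0 => i _; rewrite -expr2 sqr_ge0. Qed.

Lemma dotp_eq0 x y : dotp x x = 0 -> dotp x y = 0.
Proof.
move=> /eqP; rewrite /dotp psumr_eq0; last by move=> i _; rewrite -expr2 sqr_ge0.
move=> /allP H; apply: big1 => i _.
have /implyP/(_ isT) := H i (mem_index_enum _).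
by rewrite mulf_eq0 orbb => /eqP ->; rewrite mul0r.
Qed.

Lemma l2norm_ge0 x : 0 <= l2norm x.
Proof. exact: sqrtr_ge0. Qed.

Lemma l2norm_sq x : l2norm x ^+ 2 = dotp x x.
Proof. by rewrite sqr_sqrtr // dotp_ge0. Qed.

Lemma CS p q : dotp p q <= l2norm p * l2norm q.
Proof.
have hP := l2norm_sq p; have hQ := l2norm_sq q.
have hP0 := l2norm_ge0 p; have hQ0 := l2norm_ge0 q.
have [P0|Ppos] := eqVneq (l2norm p) 0.
  have : dotp p p = 0 by rewrite -hP P0 expr2 mulr0.
  by move/(dotp_eq0 q) => ->; rewrite P0 mul0r.
have [Q0|Qpos] := eqVneq (l2norm q) 0.
  have : dotp q q = 0 by rewrite -hQ Q0 expr2 mulr0.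
  by move/(dotp_eq0 p) => h; rewrite dotpC h Q0 mulr0.
set P := l2norm p in hP hP0 Ppos *; set Q := l2norm q in hQ hQ0 Qpos *.
have := dotp_ge0 (Q *: p - P *: q).
rewrite !(dotpBl, dotpBr, dotpZl, dotpZr) (dotpC q p) -hP -hQ.
have PQ : 0 < P * Q by rewrite mulr_gt0 // lt0r ?Ppos ?Qpos.
nra.
Qed.

Lemma l2norm_tri p q : l2norm (p - q) <= l2norm p + l2norm q.
Proof.
have h1 : dotp (p - q) (p - q) <= (l2norm p + l2norm q) ^+ 2.
  rewrite !(dotpBl, dotpBr) (dotpC q p).
  have := CS p (- q); rewrite dotpC dotpNl dotpC.
  have hn : l2norm (- q) = l2norm q.
    by rewrite /l2norm dotpNl dotpC dotpNl opprK.
  rewrite hn -(l2norm_sq p) -(l2norm_sq q) => h; nra.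
rewrite /l2norm -ler_sqrt in h1; last by rewrite sqr_ge0.
rewrite sqrtr_sqr ger0_norm in h1; last by rewrite addr_ge0 ?l2norm_ge0.
exact: h1.
Qed.

Lemma dotp_expand x y a : dotp (x - a *: y) (x - a *: y) =
  dotp x x - 2 * a * dotp x y + a ^+ 2 * dotp y y.
Proof. rewrite !(dotpBl, dotpBr, dotpZl, dotpZr) (dotpC y x); ring. Qed.

Lemma dotp_expand1 x y : dotp (x - y) (x - y) =
  dotp x x - 2 * dotp x y + dotp y y.
Proof. have := dotp_expand x y 1; rewrite !scale1r => ->; ring. Qed.

Lemma bregmanE x y : bregman x y = 2^-1 * dotp (x - y) (x - y).
Proof.
rewrite /bregman /Phi /gradPhi !(dotpBl, dotpBr) (dotpC y x). by field.
Qed.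

End Aux.
Unset Implicit Arguments.

Theorem lemma13 (R : realType) (n : nat) (alpha beta : R)
  (f : 'rV[R]_n -> R) (v x_prev x_t x_star : 'rV[R]_n) :
  0 < alpha -> 0 < beta ->
  convex_fun f ->
  is_minimizer f v ->
  (forall x, alpha * l2norm (x - v) <= f x) ->
  pobd_step beta f v x_prev x_t ->
  f x_star < f x_t ->
  l2norm (x_t - x_star) - l2norm (x_star - x_prev) <=
    - (Num.sqrt (1 + (2 / (alpha * beta)) ^+ 2) - 2 / (alpha * beta))
      * l2norm (x_t - x_prev).
Proof.
move=> ha hb hconv hmin hgrow [[_ ->]|[_ [l [hl [[hK hproj] hd]]]]] hlt.
  by have := hmin x_star; rewrite leNgt hlt.
rewrite /sublevel in hK.
set u := x_t - x_star; set w := x_t - x_prev.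
(* variational inequality *)
have hwu : dotp w u <= 0.
  rewrite leNgt; apply/negP => mpos.
  set m := dotp w u in mpos; set U := dotp u u.
  have U0 : 0 <= U by exact: dotp_ge0.
  set s := m / (U + m).
  have Um : 0 < U + m by lra.
  have sUm : s * (U + m) = m by rewrite /s mulfVK // gt_eqF.
  have s0 : 0 < s by rewrite /s divr_gt0.
  have s1 : s <= 1 by rewrite /s ler_pdivrMr // mul1r; lra.
  have hy : sublevel f l (s *: x_star + (1 - s) *: x_t).
    rewrite /sublevel; apply: le_trans (hconv _ _ _ (ltW s0) s1) _.
    have : f x_star <= l by lra.
    have : 0 <= 1 - s by lra.
    nra.
  have := hproj _ hy; rewrite !bregmanE.
  have -> : s *: x_star + (1 - s) *: x_t - x_prev = w - s *: u.
    by apply/rowP => i; rewrite /w /u !mxE; ring.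
  rewrite dotp_expand -/w -/m -/U => h.
  have h2 : 0 <= s * (s * U - 2 * m) by lra.
  have h3 : 0 <= s * U - 2 * m.
    by rewrite -(pmulr_rge0 _ s0).
  have : s * U = m - s * m by lra.
  nra.
set a := l2norm u; set d := l2norm w; set c := l2norm (x_star - x_prev).
have hc2 : a ^+ 2 + d ^+ 2 <= c ^+ 2.
  rewrite /a /d /c !l2norm_sq.
  have -> : x_star - x_prev = w - u by apply/rowP => i; rewrite /w /u !mxE; ring.
  rewrite dotp_expand1 -/a; lra.
have ha2 : alpha * a <= 2 * l.
  rewrite /a; have -> : u = (x_t - v) - (x_star - v) by apply/rowP => i; rewrite /u !mxE; ring.
  have := @l2norm_tri _ _ (x_t - v) (x_star - v).
  have := hgrow x_t; have := hgrow x_star. nra.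
have a0 : 0 <= a by exact: l2norm_ge0.
have c0 : 0 <= c by exact: l2norm_ge0.
have d0 : 0 <= d by exact: l2norm_ge0.
have dD : d = beta * l := hd. rewrite dD in hc2 d0 *.
set k := 2 / (alpha * beta).
have hk : k * (beta * l) = 2 * l / alpha.
  by rewrite /k; field; rewrite !gt_eqF.
have hak : a <= k * (beta * l).
  by rewrite hk ler_pdivlMr // mulrC.
have k0 : 0 < k by rewrite /k divr_gt0 // mulr_gt0.
set S := Num.sqrt (1 + k ^+ 2).
have S2 : S ^+ 2 = 1 + k ^+ 2 by rewrite sqr_sqrtr // addr_ge0 // sqr_ge0.
have S0 : 0 <= S by exact: sqrtr_ge0.
have Sk : k <= S.
  rewrite leNgt; apply/negP => hh; nra.
set D := beta * l in hc2 d0 hk hak *.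
set g := S - k.
have g0 : 0 <= g by rewrite /g subr_ge0.
have hg2 : (a + g * D) ^+ 2 <= c ^+ 2.
  have : 0 <= g * D * (k * D - a) by apply: mulr_ge0; [apply: mulr_ge0 | rewrite subr_ge0].
  have : g ^+ 2 = 1 - 2 * k * g by rewrite /g; nra.
  nra.
have : a + g * D <= c.
  rewrite leNgt; apply/negP => hh.
  have gD : 0 <= g * D by apply: mulr_ge0.
  have : c ^+ 2 < (a + g * D) ^+ 2 by nra.
  lra.
lra.
Qed.
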